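(* $$\{\varphi\in\mathrm{End}_K(P_n)\mid [x_i,\varphi]\in F_n,\ [y_i,\varphi]\in F_n\ \text{for all } i=1,\dots,n\}=\begin{cases}\mathbb{S}_1& n=1,\\ K+F_n & n>1.\end{cases}$$
   Context: $K$ is a field of characteristic zero. $\mathbb{S}_n$ is the $K$-algebra generated by $x_1,\dots,x_n,y_1,\dots,y_n$ with defining relations $y_ix_i=1$ and $[x_i,y_j]=[x_i,x_j]=[y_i,y_j]=0$ for $i\ne j$; it acts faithfully on $P_n=K[x_1,\dots,x_n]$ by $x_i*x^\alpha=x^{\alpha+e_i}$, $y_i*x^\alpha=x^{\alpha-e_i}$ if $\alpha_i>0$ and $0$ otherwise, so $\mathbb{S}_n\subset\mathrm{End}_K(P_n)$. For $k,l\in\mathbb{N}$, $E_{kl}(i):=x_i^ky_i^l-x_i^{k+1}y_i^{l+1}$; for $\alpha,\beta\in\mathbb{N}^n$, $E_{\alpha\beta}:=\prod_iE_{\alpha_i\beta_i}(i)$, and $F_n:=\bigoplus_{\alpha,\beta\in\mathbb{N}^n}KE_{\alpha\beta}$. *)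

(* Defs.v *)
From HB Require Import structures.
From mathcomp Require Import all_boot all_order all_algebra.
Set Implicit Arguments. Unset Strict Implicit. Unset Printing Implicit Defensive.
Import GRing.Theory.
Local Open Scope ring_scope.

Section Jacobson.
Variables (K : fieldType) (n : nat).

Definition mon := {ffun 'I_n -> nat}.

(* A polynomial of P_n = K[x_1..x_n] is given by its coefficient function
   alpha |-> coefficient of x^alpha, which must be finitely supported.
   Operators are maps on coefficient functions; only their restriction to
   finitely supported ones (= P_n) matters. *)
Definition coef := mon -> K.
Definition op := coef -> coef.

Definition finsupp (f : coef) : Prop :=
  exists s : seq mon, forall a, f a != 0 -> a \in s.

Definition xmon (a : mon) : coef := fun b => if b == a then 1 else 0.

Definition mon_inc (a : mon) (i : 'I_n) : mon :=
  [ffun j => if j == i then (a j).+1 else a j].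
Definition mon_dec (a : mon) (i : 'I_n) : mon :=
  [ffun j => if j == i then (a j).-1 else a j].

(* x_i * x^alpha = x^(alpha+e_i) *)
Definition xop (i : 'I_n) : op :=
  fun f b => if (0 < b i)%N then f (mon_dec b i) else 0.
(* y_i * x^alpha = x^(alpha-e_i) if alpha_i > 0, and 0 otherwise *)
Definition yop (i : 'I_n) : op := fun f b => f (mon_inc b i).

Definition op_id : op := fun f => f.
Definition op_zero : op := fun _ _ => 0.
Definition op_add (u v : op) : op := fun f b => u f b + v f b.
Definition op_opp (u : op) : op := fun f b => - u f b.
Definition op_scale (c : K) (u : op) : op := fun f b => c * u f b.
Definition op_mul (u v : op) : op := fun f => u (v f).
Definition op_comm (u v : op) : op := op_add (op_mul u v) (op_opp (op_mul v u)).
Definition op_pow (u : op) (k : nat) : op := iter k (op_mul u) op_id.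

Definition op_eq (u v : op) : Prop :=
  forall f, finsupp f -> forall b, u f b = v f b.

Definition is_End (phi : op) : Prop :=
  (forall f, finsupp f -> finsupp (phi f)) /\
  (forall (c : K) f g, finsupp f -> finsupp g ->
     forall b, phi (fun a => c * f a + g a) b = c * phi f b + phi g b).

Definition Eop (k l : nat) (i : 'I_n) : op :=
  op_add (op_mul (op_pow (xop i) k) (op_pow (yop i) l))
         (op_opp (op_mul (op_pow (xop i) k.+1) (op_pow (yop i) l.+1))).

Definition Eab (a b : mon) : op :=
  foldr (fun i u => op_mul (Eop (a i) (b i) i) u) op_id (enum 'I_n).

Definition in_F (u : op) : Prop :=
  exists s : seq (K * mon * mon),
    op_eq u (foldr (fun t v => op_add (op_scale t.1.1 (Eab t.1.2 t.2)) v)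
                   op_zero s).

Definition in_KF (u : op) : Prop :=
  exists (c : K) (g : op), in_F g /\ op_eq u (op_add (op_scale c op_id) g).

Inductive S_gen : op -> Prop :=
| S_one : S_gen op_id
| S_x i : S_gen (xop i)
| S_y i : S_gen (yop i)
| S_add u v : S_gen u -> S_gen v -> S_gen (op_add u v)
| S_scale c u : S_gen u -> S_gen (op_scale c u)
| S_mul u v : S_gen u -> S_gen v -> S_gen (op_mul u v).

Definition in_S (u : op) : Prop := exists v, S_gen v /\ op_eq u v.

End Jacobson.

(* Main.v *)
Require Import Defs.
From HB Require Import structures.
From mathcomp Require Import all_boot all_order all_algebra.
From Stdlib Require Import FunctionalExtensionality Lia.
From Stdlib Require List.
Set Implicit Arguments. Unset Strict Implicit. Unset Printing Implicit Defensive.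
Import GRing.Theory.
Local Open Scope ring_scope.

Section Basics.
Variables (K : fieldType) (n : nat).
Local Notation mon := (mon n).
Local Notation coef := (coef K n).
Local Notation op := (op K n).

Definition SF (s : seq (K * mon * mon)) (f : coef) : coef :=
  fun g => \sum_(t <- s) t.1.1 * (if g == t.1.2 then f t.2 else 0).

Definition inF' (u : op) : Prop :=
  exists s, forall f, finsupp f -> forall g, u f g = SF s f g.

Definition subc (g : mon) (i : 'I_n) k : mon := [ffun j => if j == i then (g j - k)%N else g j].
Definition addc (g : mon) (i : 'I_n) k : mon := [ffun j => if j == i then (g j + k)%N else g j].
Definition setc (g : mon) (i : 'I_n) k : mon := [ffun j => if j == i then k else g j].

Lemma xpowE i k (f : coef) g :
  op_pow (xop i) k f g = if (k <= g i)%N then f (subc g i k) else 0.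
Proof.
elim: k g => [|k IH] g /=.
  by rewrite /op_id; congr f; apply/ffunP => j; rewrite !ffunE; case: eqP => // ->; rewrite subn0.
rewrite /op_mul /xop IH.
case: (ltnP 0 (g i)) => gi.
  rewrite ffunE eqxx -subn1 leq_subRL // add1n.
  case: ifP => // _; congr f; apply/ffunP => j; rewrite !ffunE.
  by case: eqP => [->|] //; rewrite -subn1 -subnDA add1n.
by move: gi; rewrite leqn0 => /eqP ->.
Qed.

Lemma ypowE i k (f : coef) g : op_pow (yop i) k f g = f (addc g i k).
Proof.
elim: k g => [|k IH] g /=.
  by rewrite /op_id; congr f; apply/ffunP => j; rewrite !ffunE; case: eqP => // ->; rewrite addn0.
rewrite /op_mul /yop IH; congr f; apply/ffunP => j; rewrite !ffunE.
by case: eqP => [->|]; rewrite ?ffunE ?eqxx ?addnS ?addSn.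
Qed.

Lemma EopE k l i (f : coef) g :
  Eop k l i f g = if g i == k then f (setc g i l) else 0.
Proof.
rewrite /Eop /op_add /op_opp /op_mul !xpowE !ypowE.
case: (ltngtP k (g i)) => h.
-   have -> : addc (subc g i k) i l = addc (subc g i k.+1) i l.+1; last by rewrite subrr.
  apply/ffunP => j; rewrite !ffunE; case: eqP => [->|_]; rewrite ?ffunE ?eqxx //.
  by rewrite addnS -addSn -subSn // subSS.
- by rewrite subr0.
- rewrite subr0; congr f; apply/ffunP => j; rewrite !ffunE.
  by case: eqP => [->|]; rewrite ?ffunE ?eqxx // -h subnn.
Qed.

Lemma foldE (a b : mon) (l : seq 'I_n) (f : coef) g : uniq l ->
  foldr (fun i u => op_mul (Eop (a i) (b i) i) u) (@op_id K n) l f g =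
  if all (fun i => g i == a i) l then f [ffun j => if j \in l then b j else g j] else 0.
Proof.
elim: l g => [|i l IH] g /=.
  by move=> _; rewrite /op_id; congr f; apply/ffunP => j; rewrite ffunE.
case/andP => il ul; rewrite /op_mul EopE.
case: eqP => gi /=; last by [].
rewrite IH //.
have e : all (fun i0 => setc g i (b i) i0 == a i0) l = all (fun i0 => g i0 == a i0) l.
  apply: eq_in_all => j jl; rewrite ffunE; case: (j =P i) => // ji; by rewrite -ji jl in il.
rewrite e; case: ifP => // _; congr f; apply/ffunP => j; rewrite !ffunE in_cons.
by case: (j =P i) => [->|_] /=; case: ifP.
Qed.

Lemma EabE (a b : mon) (f : coef) g : Eab a b f g = if g == a then f b else 0.
Proof.
rewrite /Eab foldE ?enum_uniq //.
have -> : [ffun j => if j \in enum 'I_n then b j else g j] = b.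
  by apply/ffunP => j; rewrite ffunE mem_enum.
case: ifP => h; case: eqP => e //.
- by case: e; apply/ffunP => j; move/allP: h => /(_ j); rewrite mem_enum => /(_ isT) /eqP.
- by move: h; rewrite e; move/negbT/negP; case; apply/allP => j _.
Qed.

Lemma FfoldE (s : seq (K * mon * mon)) f g :
  foldr (fun t v => op_add (op_scale t.1.1 (Eab t.1.2 t.2)) v) (@op_zero K n) s f g = SF s f g.
Proof.
elim: s => [|t s IH]; first by rewrite /SF big_nil.
by rewrite /= /op_add /op_scale IH EabE /SF big_cons.
Qed.

Lemma in_FE (u : op) : in_F u <-> inF' u.
Proof.
split=> [[s h]|[s h]]; exists s => f fs g; by rewrite h // FfoldE.
Qed.


Definition lin_fs (u : op) := forall (c : K) (f g : coef), finsupp f -> finsupp g ->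
  forall b, u (fun a => c * f a + g a) b = c * u f b + u g b.
Definition supp_in (f : coef) (S : seq mon) := forall a, f a != 0 -> a \in S.

Lemma finsupp_xmon (b : mon) : finsupp (xmon K b).
Proof. by exists [:: b] => a; rewrite /xmon inE; case: (a =P b) => // _; rewrite eqxx. Qed.

Lemma finsupp0 : @finsupp K n (fun _ : mon => 0).
Proof. by exists [::] => a; rewrite eqxx. Qed.

Lemma finsupp_lin c (f g : coef) : finsupp f -> finsupp g -> finsupp (fun a => c * f a + g a).
Proof.
move=> [s1 h1] [s2 h2]; exists (s1 ++ s2) => a; rewrite mem_cat.
case: (f a =P 0) => [->|/eqP fa]; first by rewrite mulr0 add0r => /h2 ->; rewrite orbT.
by rewrite h1.
Qed.

Lemma finsupp_ext (f g : coef) : (forall a, f a = g a) -> finsupp f -> finsupp g.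
Proof. by move=> e [s h]; exists s => a; rewrite -e; apply: h. Qed.

Lemma finsupp_sum (S : seq mon) (w : mon -> K) :
  finsupp (fun a => \sum_(b <- S) w b * xmon K b a).
Proof.
exists S => a; apply: contraR => aS; rewrite big_seq big1 // => b bS.
by rewrite /xmon; case: eqP => [e|_]; [rewrite e bS in aS | rewrite mulr0].
Qed.

Lemma lin_zero u : lin_fs u -> forall b, u (fun _ => 0) b = 0.
Proof.
move=> L b; have := L 1 _ _ finsupp0 finsupp0 b.
have -> : (fun a : mon => 1 * (0:K) + 0) = (fun _ => 0).
  by apply: functional_extensionality => a; rewrite mul1r addr0.
by rewrite mul1r => h; apply: (@addrI _ (u (fun _ => 0) b)); rewrite addr0 -h.
Qed.

Lemma lin_sum u : lin_fs u -> forall (S : seq mon) (w : mon -> K) b,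
  u (fun a => \sum_(x <- S) w x * xmon K x a) b = \sum_(x <- S) w x * u (xmon K x) b.
Proof.
move=> L; elim=> [|x S IH] w b.
  have -> : (fun a : mon => \sum_(x <- [::]) w x * xmon K x a) = (fun _ => 0).
    by apply: functional_extensionality => a; rewrite big_nil.
  by rewrite lin_zero // big_nil.
have -> : (fun a : mon => \sum_(y <- x :: S) w y * xmon K y a) =
          (fun a => w x * xmon K x a + \sum_(y <- S) w y * xmon K y a).
  by apply: functional_extensionality => a; rewrite big_cons.
rewrite L; [|exact: finsupp_xmon|exact: finsupp_sum]; rewrite big_cons; congr (_ + _); apply: IH.
Qed.

Lemma decomp (S : seq mon) (f : coef) : uniq S -> supp_in f S ->
  f = (fun a => \sum_(x <- S) f x * xmon K x a).
Proof.
move=> uS sf; apply: functional_extensionality => a.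
have -> : \sum_(x <- S) f x * xmon K x a = if a \in S then f a else 0.
  elim: S uS {sf} => [|x S IH]; first by rewrite big_nil.
  case/andP => xS uS; rewrite big_cons IH // in_cons /xmon.
  case: (a =P x) => [->|_] /=; last by rewrite mulr0 add0r.
  by rewrite (negbTE xS) mulr1 addr0.
by case: ifP => // aS; apply/eqP; apply: contraFT aS => /sf.
Qed.

Lemma lin_expand u (S : seq mon) (f : coef) b : lin_fs u -> uniq S -> supp_in f S ->
  u f b = \sum_(x <- S) f x * u (xmon K x) b.
Proof. by move=> L uS sf; rewrite {1}(decomp uS sf) lin_sum. Qed.

Lemma finsupp_uniq (f : coef) : finsupp f -> exists S, uniq S /\ supp_in f S.
Proof. by case=> s h; exists (undup s); split; [apply: undup_uniq | move=> a /h; rewrite mem_undup]. Qed.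

Lemma sum_supp (T : eqType) (S1 S2 : seq T) (h : T -> K) : uniq S1 -> uniq S2 ->
  (forall x, h x != 0 -> (x \in S1) && (x \in S2)) ->
  \sum_(x <- S1) h x = \sum_(x <- S2) h x.
Proof.
move=> u1 u2 H.
have E : forall (A B : seq T), (forall x, h x != 0 -> x \in B) ->
    \sum_(x <- A) h x = \sum_(x <- filter (mem B) A) h x.
  move=> A B HB; rewrite big_filter [RHS]big_mkcond /=; apply: eq_bigr => x _.
  case: ifP => // xB; apply/eqP; apply: contraFT xB => /HB //.
rewrite (E S1 S2) => [|x /H /andP[]//].
rewrite (E S2 S1) => [|x /H /andP[]//].
apply: perm_big; apply: uniq_perm; rewrite ?filter_uniq // => x.
by rewrite !mem_filter andbC.
Qed.


Lemma inc_dec (g : mon) i : (0 < g i)%N -> mon_inc (mon_dec g i) i = g.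
Proof.
move=> h; apply/ffunP => j; rewrite !ffunE.
by case: (j =P i) => [->|//]; rewrite prednK.
Qed.

Lemma dec_inc (g : mon) i : mon_dec (mon_inc g i) i = g.
Proof. by apply/ffunP => j; rewrite !ffunE; case: (j =P i) => [->|/eqP/negbTE ne]; rewrite ?eqxx ?ne. Qed.

Lemma inc_pos (g : mon) i : (0 < mon_inc g i i)%N.
Proof. by rewrite ffunE eqxx. Qed.

Lemma eq_dec_inc (g a : mon) i : (0 < g i)%N -> (mon_dec g i == a) = (g == mon_inc a i).
Proof. by move=> h; apply/eqP/eqP => [<-|->]; rewrite ?inc_dec ?dec_inc. Qed.

Lemma inc_eq (g a : mon) i : (mon_inc g i == a) = (0 < a i)%N && (g == mon_dec a i).
Proof.
case: (ltnP 0 (a i)) => h /=; first by rewrite eq_sym -eq_dec_inc // eq_sym.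
by apply/eqP => e; move: (inc_pos g i); rewrite e; move: h; rewrite leqn0 => /eqP ->.
Qed.

Lemma SF_cat s1 s2 (f : coef) g : SF (s1 ++ s2) f g = SF s1 f g + SF s2 f g.
Proof. by rewrite /SF big_cat. Qed.

Lemma SF_nil (f : coef) g : SF [::] f g = 0.
Proof. by rewrite /SF big_nil. Qed.

Definition sscale (c : K) (s : seq (K * mon * mon)) :=
  [seq (c * t.1.1, t.1.2, t.2) | t : K * mon * mon <- s].

Lemma SF_scale c s (f : coef) g : SF (sscale c s) f g = c * SF s f g.
Proof. by rewrite /SF big_map mulr_sumr; apply: eq_bigr => t _; rewrite mulrA. Qed.

Lemma SF_sub s1 s2 (f : coef) g : SF (s1 ++ sscale (-1) s2) f g = SF s1 f g - SF s2 f g.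
Proof. by rewrite SF_cat SF_scale mulN1r. Qed.

Lemma SF_add s (f h : coef) g : SF s (fun a => f a + h a) g = SF s f g + SF s h g.
Proof.
rewrite /SF -big_split; apply: eq_bigr => t _ /=.
by case: ifP => _; rewrite ?mulrDr // ?addr0 ?mulr0 ?addr0.
Qed.

Lemma SF_scl s c (f : coef) g : SF s (fun a => c * f a) g = c * SF s f g.
Proof.
rewrite /SF mulr_sumr; apply: eq_bigr => t _ /=.
by case: ifP; rewrite ?mulr0 // mulrCA.
Qed.

Lemma SF_ext s (f h : coef) g : (forall a, f a = h a) -> SF s f g = SF s h g.
Proof. by move=> e; rewrite /SF; apply: eq_bigr => t _; rewrite e. Qed.

Lemma SF_xl i s (f : coef) g :
  xop i (SF s f) g = SF [seq (t.1.1, mon_inc t.1.2 i, t.2) | t : K * mon * mon <- s] f g.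
Proof.
rewrite /xop /SF big_map; case: ifP => h.
  by apply: eq_bigr => t _ /=; rewrite eq_dec_inc.
rewrite big1 // => t _ /=; case: eqP => [e|]; last by rewrite mulr0.
by move: h; rewrite e inc_pos.
Qed.

Lemma SF_xr i s (f : coef) g :
  SF s (xop i f) g = SF [seq (if (0 < t.2 i)%N then t.1.1 else 0, t.1.2, mon_dec t.2 i) | t : K * mon * mon <- s] f g.
Proof.
rewrite /xop /SF big_map; apply: eq_bigr => t _ /=.
by case: ifP; case: ifP; rewrite ?mul0r ?mulr0.
Qed.

Lemma SF_yl i s (f : coef) g :
  yop i (SF s f) g = SF [seq (if (0 < t.1.2 i)%N then t.1.1 else 0, mon_dec t.1.2 i, t.2) | t : K * mon * mon <- s] f g.
Proof.
rewrite /yop /SF big_map; apply: eq_bigr => t _ /=.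
by rewrite inc_eq; case: (ltnP 0 (t.1.2 i)) => h /=; rewrite ?mulr0 ?mul0r.
Qed.

Lemma SF_yr i s (f : coef) g :
  SF s (yop i f) g = SF [seq (t.1.1, t.1.2, mon_inc t.2 i) | t : K * mon * mon <- s] f g.
Proof. by rewrite /SF big_map. Qed.

Lemma Sgen_lin (v : op) : S_gen v -> forall (c : K) (f h : coef) g,
  v (fun a => c * f a + h a) g = c * v f g + v h g.
Proof.
elim=> {v} [|i|i|u w _ IHu _ IHw|d u _ IH|u w _ IHu _ IHw] c f h g //.
- by rewrite /xop; case: ifP; rewrite // mulr0 addr0.
- by rewrite /op_add IHu IHw mulrDr addrACA.
- by rewrite /op_scale IH mulrDr mulrCA.
- rewrite /op_mul.
  have -> : w (fun a => c * f a + h a) = (fun a => c * w f a + w h a).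
    by apply: functional_extensionality => a; apply: IHw.
  by apply: IHu.
Qed.

Lemma Sgen_add (v : op) : S_gen v -> forall (f h : coef) g,
  v (fun a => f a + h a) g = v f g + v h g.
Proof.
move=> Sv f h g; rewrite -[v f g]mul1r -Sgen_lin //.
by congr v; apply: functional_extensionality => a; rewrite mul1r.
Qed.

Lemma Sgen_zero (v : op) : S_gen v -> forall g, v (fun _ => 0) g = 0.
Proof.
move=> Sv g; have := Sgen_add Sv (fun _ => 0) (fun _ => 0) g.
have -> : (fun _ : mon => (0 : K) + 0) = (fun _ => 0).
  by apply: functional_extensionality => a; rewrite addr0.
by move=> h; apply: (@addrI _ (v (fun _ => 0) g)); rewrite addr0 -h.
Qed.

Lemma Sgen_scl (v : op) : S_gen v -> forall (c : K) (f : coef) g,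
  v (fun a => c * f a) g = c * v f g.
Proof.
move=> Sv c f g; rewrite -[RHS]addr0 -(Sgen_zero Sv g) -Sgen_lin //.
by congr v; apply: functional_extensionality => a; rewrite addr0.
Qed.

Lemma Sgen_sub (v : op) : S_gen v -> forall (f h : coef) g,
  v (fun a => f a - h a) g = v f g - v h g.
Proof.
move=> Sv f h g; have := Sgen_lin Sv (-1) h f g; rewrite mulN1r addrC => <-.
by congr v; apply: functional_extensionality => a; rewrite mulN1r addrC.
Qed.

Lemma Sgen_lfs (v : op) : S_gen v -> lin_fs v.
Proof. by move=> Sv c f h _ _ g; apply: Sgen_lin. Qed.

Definition allF (u : op) := exists s, forall f g, u f g = SF s f g.

Lemma Sgen_Q (v : op) : S_gen v -> forall s, exists s', forall f g, v (SF s f) g = SF s' f g.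
Proof.
elim=> {v} [|i|i|u w _ IHu _ IHw|d u _ IH|u w _ IHu _ IHw] s.
- by exists s.
- by eexists => f g; apply: SF_xl.
- by eexists => f g; apply: SF_yl.
- have [s1 h1] := IHu s; have [s2 h2] := IHw s.
  by exists (s1 ++ s2) => f g; rewrite SF_cat /op_add h1 h2.
- have [s1 h1] := IH s.
  by exists (sscale d s1) => f g; rewrite SF_scale /op_scale h1.
- have [s1 h1] := IHw s; have [s2 h2] := IHu s1.
  exists s2 => f g; rewrite /op_mul.
  have -> : w (SF s f) = SF s1 f by apply: functional_extensionality => a; apply: h1.
  by apply: h2.
Qed.

Lemma Sgen_R (v : op) : S_gen v -> forall s, exists s', forall f g, SF s (v f) g = SF s' f g.
Proof.
elim=> {v} [|i|i|u w _ IHu _ IHw|d u _ IH|u w _ IHu _ IHw] s.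
- by exists s.
- by eexists => f g; apply: SF_xr.
- by eexists => f g; apply: SF_yr.
- have [s1 h1] := IHu s; have [s2 h2] := IHw s.
  by exists (s1 ++ s2) => f g; rewrite SF_cat /op_add SF_add h1 h2.
- have [s1 h1] := IH s.
  by exists (sscale d s1) => f g; rewrite SF_scale /op_scale SF_scl h1.
- have [s1 h1] := IHu s; have [s2 h2] := IHw s1.
  by exists s2 => f g; rewrite /op_mul h1 h2.
Qed.

Lemma comm_gen (x : op) : S_gen x ->
  (forall j, allF (op_comm x (xop j))) -> (forall j, allF (op_comm x (yop j))) ->
  forall v, S_gen v -> allF (op_comm x v).
Proof.
move=> Sx Hx Hy.
move=> v; elim=> {v} [|i|i|u w Su IHu Sw IHw|d u Su IH|u w Su IHu Sw IHw].
- by exists [::] => f g; rewrite SF_nil /op_comm /op_add /op_opp /op_mul /op_id subrr.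
- exact: Hx.
- exact: Hy.
- have [s1 h1] := IHu; have [s2 h2] := IHw.
  exists (s1 ++ s2) => f g; rewrite SF_cat -h1 -h2 /op_comm /op_add /op_opp /op_mul.
  rewrite (Sgen_add Sx) opprD addrACA //.
- have [s1 h1] := IH.
  exists (sscale d s1) => f g; rewrite SF_scale -h1 /op_comm /op_add /op_opp /op_mul /op_scale.
  by rewrite (Sgen_scl Sx) mulrBr.
- have [s1 h1] := IHu; have [s2 h2] := IHw.
  have [s3 h3] := Sgen_R Sw s1; have [s4 h4] := Sgen_Q Su s2.
  exists (s3 ++ s4) => f g; rewrite SF_cat -h3 -h4.
  have -> : SF s2 f = op_comm x w f by apply: functional_extensionality => a; rewrite h2.
  rewrite -h1 /op_comm /op_add /op_opp /op_mul.
  rewrite (Sgen_sub Su).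
  by rewrite addrA subrK.
Qed.


Definition big N (g b : mon) := [exists j, (N < g j)%N || (N < b j)%N].

Lemma big_mono N (g b g' b' : mon) : (forall j, g j <= g' j)%N -> (forall j, b j <= b' j)%N ->
  big N g b -> big N g' b'.
Proof.
move=> hg hb /existsP[j /orP[h|h]]; apply/existsP; exists j; apply/orP.
- by left; apply: leq_trans h (hg j).
- by right; apply: leq_trans h (hb j).
Qed.

Lemma big_all N (g b : mon) j : (N < g j)%N -> big N g b.
Proof. by move=> h; apply/existsP; exists j; rewrite h. Qed.

Lemma big_allr N (g b : mon) j : (N < b j)%N -> big N g b.
Proof. by move=> h; apply/existsP; exists j; rewrite h orbT. Qed.

Lemma bound_F (u : op) : inF' u -> exists N, forall g b, big N g b -> u (xmon K b) g = 0.
Proof.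
case=> s hs.
exists (\max_(t <- s) \max_(j < n) maxn (t.1.2 j) (t.2 j))%N => g b bg.
rewrite hs; last exact: finsupp_xmon. rewrite /SF big_seq big1 // => t ts.
case: (g =P t.1.2) => [eg|]; last by rewrite mulr0.
rewrite /xmon; case: (t.2 =P b) => [eb|]; last by rewrite mulr0.
case/existsP: bg => j; rewrite eg -eb.
have h1 := @leq_bigmax_seq _ s xpredT (fun t : K * mon * mon => \max_(j < n) maxn (t.1.2 j) (t.2 j))%N t ts isT.
have h2 := @leq_bigmax _ (fun j => maxn (t.1.2 j) (t.2 j)) j.
have h3 := leq_trans h2 h1.
by rewrite !ltnNge (leq_trans (leq_maxl _ _) h3) (leq_trans (leq_maxr _ _) h3).
Qed.

Lemma xop_xmon i (b : mon) : xop i (xmon K b) = xmon K (mon_inc b i).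
Proof.
apply: functional_extensionality => a; rewrite /xop /xmon.
case: ifP => h; first by rewrite eq_dec_inc.
by case: eqP => // e; move: h; rewrite e inc_pos.
Qed.

Lemma yop_xmon i (b : mon) :
  yop i (xmon K b) = if (0 < b i)%N then xmon K (mon_dec b i) else (fun _ => 0).
Proof.
apply: functional_extensionality => a; rewrite /yop /xmon inc_eq.
by case: (0 < b i)%N.
Qed.

Definition addm (g t : mon) : mon := [ffun j => g j + t j]%N.

Section Mat.
Variables (phi : op) (Lphi : lin_fs phi) (N : nat).
Hypothesis HX : forall i g b, big N g b -> op_comm (xop i) phi (xmon K b) g = 0.
Hypothesis HY : forall i g b, big N g b -> op_comm (yop i) phi (xmon K b) g = 0.

Let M g b := phi (xmon K b) g.

Lemma relX i g b : big N g b ->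
  (if (0 < g i)%N then M (mon_dec g i) b else 0) = M g (mon_inc b i).
Proof.
move/(HX i)/eqP; rewrite /op_comm /op_add /op_opp /op_mul subr_eq0 xop_xmon => /eqP.
by rewrite /xop /M.
Qed.

Lemma relY i g b : big N g b ->
  M (mon_inc g i) b = if (0 < b i)%N then M g (mon_dec b i) else 0.
Proof.
move/(HY i)/eqP; rewrite /op_comm /op_add /op_opp /op_mul subr_eq0 yop_xmon => /eqP.
by rewrite /yop /M => ->; case: ifP => // _; rewrite lin_zero.
Qed.

Lemma inc_ge (g : mon) i j : (g j <= mon_inc g i j)%N.
Proof. by rewrite ffunE; case: eqP. Qed.

Lemma shift1 i g b : big N g b -> M g b = M (mon_inc g i) (mon_inc b i).
Proof.
move=> bg; have := relX i (big_mono (inc_ge g i) (fun j => leqnn _) bg).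
by rewrite inc_pos dec_inc.
Qed.

Lemma addc_ge (g : mon) i k j : (g j <= addc g i k j)%N.
Proof. by rewrite ffunE; case: eqP => // _; apply: leq_addr. Qed.

Lemma addcS (g : mon) i k : addc g i k.+1 = mon_inc (addc g i k) i.
Proof. by apply/ffunP => j; rewrite !ffunE; case: (j =P i) => [->|]; rewrite ?ffunE ?eqxx ?addnS. Qed.

Lemma shiftk i k g b : big N g b -> M g b = M (addc g i k) (addc b i k).
Proof.
move=> bg; elim: k => [|k IH].
  by congr M; apply/ffunP => j; rewrite ffunE; case: eqP => // ->; rewrite addn0.
rewrite IH !addcS; apply: shift1.
by apply: big_mono bg; apply: addc_ge.
Qed.

Definition addv (l : seq 'I_n) (t : mon) (g : mon) := foldr (fun i h => addc h i (t i)) g l.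

Lemma addvE l t g j : addv l t g j = (g j + count_mem j l * t j)%N.
Proof.
elim: l => [|i l IH] /=; first by rewrite mul0n addn0.
rewrite ffunE IH; case: (j =P i) => [->|ne]; first by rewrite eqxx /= mulSn addnA addnAC.
have -> : (i == j) = false by apply/eqP => e; apply: ne. by [].
Qed.

Lemma shiftv t g b : big N g b -> M g b = M (addm g t) (addm b t).
Proof.
move=> bg.
have E : forall h : mon, addm h t = addv (enum 'I_n) t h.
  move=> h; apply/ffunP => j; rewrite addvE ffunE (count_uniq_mem _ (enum_uniq _)) mem_enum.
  by rewrite mul1n.
rewrite !E; elim: (enum 'I_n) => [|i l IH] //=.
rewrite IH; apply: shiftk; apply: big_mono bg => j; rewrite addvE; apply: leq_addr.
Qed.

Definition cg (g b : mon) : mon := [ffun j => g j - minn (g j) (b j) + N.+1]%N.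

Lemma canon g b : (0 < n)%N -> big N g b -> M g b = M (cg g b) (cg b g).
Proof.
move=> n0 bg.
set j0 := Ordinal n0.
rewrite (shiftv [ffun _ => N.+1] bg).
set mu : mon := [ffun j => minn (g j) (b j)].
have bc : big N (cg g b) (cg b g) by apply: (@big_all _ _ _ j0); rewrite ffunE leq_addl.
rewrite (shiftv mu bc); congr M; apply/ffunP => j; rewrite !ffunE.
- by rewrite addnAC subnK // geq_minl.
- by rewrite [minn (b j) _]minnC addnAC subnK // geq_minr.
Qed.

Lemma zeroY g b i : big N (mon_dec g i) b -> b i = 0%N -> (0 < g i)%N -> M g b = 0.
Proof.
by move=> bg bi gi; have := relY i bg; rewrite inc_dec // bi => ->.
Qed.

Lemma zeroX g b i : big N g (mon_dec b i) -> g i = 0%N -> (0 < b i)%N -> M g b = 0.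
Proof.
by move=> bg gi bi; have := relX i bg; rewrite inc_dec // gi => <-.
Qed.

End Mat.


Lemma big_le N N' (g b : mon) : (N <= N')%N -> big N' g b -> big N g b.
Proof.
move=> le /existsP[j /orP[h|h]]; apply/existsP; exists j; apply/orP.
- by left; apply: leq_ltn_trans h.
- by right; apply: leq_ltn_trans h.
Qed.

Lemma sum_pick (T : eqType) (S : seq T) (d : T) (A : T -> K) : uniq S ->
  \sum_(x <- S) (if d == x then A x else 0) = if d \in S then A d else 0.
Proof.
elim: S => [|x S IH]; first by rewrite big_nil.
case/andP => xS uS; rewrite big_cons IH // in_cons.
case: (d =P x) => [->|_] /=; last by rewrite add0r.
by rewrite (negbTE xS) addr0.
Qed.

Definition box N : seq mon :=
  undup [seq [ffun j => nat_of_ord (t j)] | t : {ffun 'I_n -> 'I_N.+1} <- enum {ffun 'I_n -> 'I_N.+1}].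

Lemma inbox N (g : mon) : (forall j, g j <= N)%N -> g \in box N.
Proof.
move=> h; rewrite mem_undup; apply/mapP.
exists [ffun j => inord (g j) : 'I_N.+1]; first by rewrite mem_enum.
by apply/ffunP => j; rewrite !ffunE inordK // ltnS.
Qed.

Lemma notbig N (g b : mon) : ~~ big N g b -> (forall j, g j <= N)%N /\ (forall j, b j <= N)%N.
Proof.
move/existsPn => h; split=> j; move: (h j); rewrite negb_or -!leqNgt => /andP[] //.
Qed.

Lemma box_F (u : op) N : lin_fs u -> (forall g b, big N g b -> u (xmon K b) g = 0) -> inF' u.
Proof.
move=> Lu Hu.
pose e (p : mon * mon) := u (xmon K p.2) p.1.
exists [seq (e p, p.1, p.2) | p <- [seq (x, y) | x <- box N, y <- box N]] => f fs g.
have [S [uS sS]] := finsupp_uniq fs.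
rewrite (lin_expand _ Lu uS sS) /SF big_map big_allpairs.
have -> : \sum_(x <- box N) \sum_(y <- box N) e (x, y) * (if g == (x, y).1 then f (x, y).2 else 0)
   = \sum_(x <- box N) (if g == x then \sum_(y <- box N) e (g, y) * f y else 0).
  apply: eq_bigr => x _ /=; case: (g =P x) => [->//|_].
  by rewrite big1 // => y _; rewrite mulr0.
rewrite sum_pick ?undup_uniq //.
case: ifP => gb.
  rewrite [RHS](eq_bigr (fun y => f y * u (xmon K y) g)); last by move=> y _; rewrite mulrC.
  apply: sum_supp; rewrite ?undup_uniq // => y.
  case: (f y =P 0) => [->|/eqP fy]; first by rewrite mul0r eqxx.
  case: (u (xmon K y) g =P 0) => [->|/eqP ey _]; first by rewrite mulr0 eqxx.
  rewrite sS //=; apply: inbox; case: (boolP (big N g y)) => [/Hu ey'|/notbig[]//].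
  by rewrite ey' eqxx in ey.
rewrite big1 // => y _; rewrite Hu ?mulr0 //.
case: (boolP (big N g y)) => // /notbig[h _].
by rewrite inbox in gb.
Qed.

Lemma lin_fs_sub (u w : op) : lin_fs u -> lin_fs w -> lin_fs (fun f g => u f g - w f g).
Proof.
move=> Lu Lw c f h fs hs b; rewrite Lu // Lw //.
by rewrite mulrBr opprD addrACA.
Qed.

Lemma lin_fs_id (c : K) : lin_fs (fun f g => c * f g).
Proof. by move=> d f h _ _ b; rewrite mulrDr mulrCA. Qed.

Section Mat2.
Variables (phi : op) (Lphi : lin_fs phi) (N : nat).
Hypothesis HX : forall i g b, big N g b -> op_comm (xop i) phi (xmon K b) g = 0.
Hypothesis HY : forall i g b, big N g b -> op_comm (yop i) phi (xmon K b) g = 0.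
Let M g b := phi (xmon K b) g.

Definition Lc : mon := [ffun _ => N.+1].

Lemma diag_n2 : (1 < n)%N -> forall g b, big N g b -> M g b = if g == b then M Lc Lc else 0.
Proof.
move=> n1 g b bg; have n0 : (0 < n)%N by apply: ltnW.
rewrite /M (canon HX n0 bg).
case: (g =P b) => [<-|/eqP ne].
  by congr phi; [congr xmon|]; apply/ffunP => j; rewrite !ffunE minnn subnn.
have [j gj] : exists j, g j != b j.
  by apply/existsP; apply: contraR ne => /existsPn h; apply/eqP/ffunP => j; apply/eqP; move: (h j); rewrite negbK.
have [k kj] : exists k : 'I_n, k != j.
  case: (j =P Ordinal n0) => [->|ne0]; last by exists (Ordinal n0); apply/eqP => e; apply: ne0.
  by exists (Ordinal n1).
set G := cg N g b; set B := cg N b g.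
have GL : forall x y (j : 'I_n), (N < cg N x y j)%N by move=> x y i; rewrite ffunE addnS ltnS leq_addl.
have E : forall x : mon, (N < x j)%N -> x = addc (subc x j N.+1) j N.+1.
  move=> x xj; apply/ffunP => i; rewrite !ffunE; case: (i =P j) => [->|//].
  by rewrite subnK.
have bb : big N (subc G j N.+1) (subc B j N.+1).
  by apply: (big_all _ (j:=k)); rewrite ffunE (negbTE kj) GL.
rewrite (E G) ?GL // (E B) ?GL // -(shiftk HX j N.+1 bb).
have bk : forall x y : mon, (N < x k)%N -> big N (mon_dec x j) y /\ big N x (mon_dec y j).
  move=> x y h; split; [apply: (big_all _ (j:=k)) | apply: (big_all _ (j:=k))];
  by rewrite ?ffunE ?(negbTE kj).
have Gk : (N < subc G j N.+1 k)%N by rewrite ffunE (negbTE kj) GL.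
have [b1 b2] := bk _ (subc B j N.+1) Gk.
case: (ltngtP (g j) (b j)) => h.
- apply: (zeroX HX b2); rewrite !ffunE eqxx addnK.
    by rewrite (minn_idPl (ltnW h)) subnn.
  by rewrite (minn_idPr (ltnW h)) subn_gt0.
- apply: (zeroY Lphi HY b1); rewrite !ffunE eqxx addnK.
    by rewrite (minn_idPl (ltnW h)) subnn.
  by rewrite (minn_idPr (ltnW h)) subn_gt0.
- by rewrite h eqxx in gj.
Qed.

End Mat2.


Lemma finsupp_xop i (f : coef) : finsupp f -> finsupp (xop i f).
Proof.
case=> s hs; exists [seq mon_inc a i | a <- s] => a; rewrite /xop.
case: ifP => [ai /hs da|]; last by rewrite eqxx.
by apply/mapP; exists (mon_dec a i) => //; rewrite inc_dec.
Qed.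

Lemma finsupp_yop i (f : coef) : finsupp f -> finsupp (yop i f).
Proof.
case=> s hs; exists [seq mon_dec a i | a <- s] => a; rewrite /yop => /hs h.
by apply/mapP; exists (mon_inc a i) => //; rewrite dec_inc.
Qed.

Lemma comm_transfer (phi v x : op) f g : op_eq phi v -> finsupp f -> finsupp (x f) ->
  op_comm x phi f g = op_comm x v f g.
Proof.
move=> e fs xs; rewrite /op_comm /op_add /op_opp /op_mul e //.
have -> : phi f = v f by apply: functional_extensionality => a; apply: e.
by [].
Qed.

Lemma KF_comm (phi x : op) (c : K) s sl sr : S_gen x ->
  (forall f, finsupp f -> finsupp (x f)) ->
  (forall f, finsupp f -> forall b, phi f b = c * f b + SF s f b) ->
  (forall f b, x (SF s f) b = SF sl f b) -> (forall f b, SF s (x f) b = SF sr f b) ->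
  inF' (op_comm x phi).
Proof.
move=> Sx xfs e hl hr; exists (sl ++ sscale (-1) sr) => f fs b.
rewrite SF_sub /op_comm /op_add /op_opp /op_mul (e (x f) (xfs f fs)).
have -> : phi f = (fun a => c * f a + SF s f a) by apply: functional_extensionality => a; apply: e.
rewrite Sgen_lin // hl hr.
by rewrite opprD addrACA subrr add0r.
Qed.

End Basics.

Section One.
Variable K : fieldType.
Local Notation mon := (mon 1).
Local Notation coef := (coef K 1).
Local Notation op := (op K 1).
Let o : 'I_1 := ord0.

Lemma mon1 (g : mon) : g = [ffun _ => g o].
Proof. by apply/ffunP => j; rewrite ffunE (ord1 j). Qed.

Lemma mon1_eq (g b : mon) : (g == b) = (g o == b o).
Proof. by apply/eqP/eqP => [->//|e]; rewrite (mon1 g) (mon1 b) e. Qed.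

Definition lsum (l : seq (K * op)) : op :=
  foldr (fun p u => op_add (op_scale p.1 p.2) u) (op_scale 0 (@op_id K 1)) l.

Lemma lsumE (l : seq (K * op)) (f : coef) g : lsum l f g = \sum_(p <- l) p.1 * p.2 f g.
Proof.
elim: l => [|p l IH]; first by rewrite big_nil /= /op_scale mul0r.
by rewrite big_cons /= /op_add /op_scale IH.
Qed.

Lemma In_cat (T : Type) (l1 l2 : seq T) p : List.In p (l1 ++ l2) -> List.In p l1 \/ List.In p l2.
Proof. elim: l1 => [|x l IH] /=; first by right. case=> [->|/IH[]]; auto. Qed.

Lemma In_map (T U : Type) (f : T -> U) (l : seq T) p : List.In p (map f l) -> exists x, p = f x.
Proof. elim: l => [|x l IH] //= [<-|/IH]; eauto. Qed.

Lemma Sgen_lsum (l : seq (K * op)) : (forall p, List.In p l -> S_gen p.2) -> S_gen (lsum l).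
Proof.
elim: l => [|p l IH] h /=; first by apply: S_scale; apply: S_one.
apply: S_add; first by apply: S_scale; apply: h; left.
by apply: IH => q ql; apply: h; right.
Qed.

Lemma Sgen_pow (u : op) k : S_gen u -> S_gen (op_pow u k).
Proof. by move=> Su; elim: k => [|k IH]; [apply: S_one | apply: S_mul]. Qed.

Definition Euop (k l : nat) : op :=
  op_add (op_mul (op_pow (xop o) k) (op_pow (yop o) l))
    (op_scale (-1) (op_mul (op_pow (xop o) k.+1) (op_pow (yop o) l.+1))).

Lemma Sgen_Euop k l : S_gen (Euop k l).
Proof.
by apply: S_add; [|apply: S_scale]; apply: S_mul; apply: Sgen_pow; constructor.
Qed.

Lemma EuopE (a b : mon) f g : Euop (a o) (b o) f g = if g == a then f b else 0.
Proof.
have -> : Euop (a o) (b o) f g = Eop (a o) (b o) o f g.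
  by rewrite /Euop /Eop /op_add /op_scale /op_opp mulN1r.
rewrite EopE mon1_eq; case: ifP => // _; congr f.
by apply/ffunP => j; rewrite ffunE (ord1 j) eqxx.
Qed.

Ltac nlia := unfold subn, subn_rec, addn, addn_rec in *; lia.

Lemma ar1 (x y k : nat) : (if k <= x then x - k == y else false)%N = (y <= x)%N && (x - y == k)%N.
Proof.
case: (leqP k x) => /leP h; apply/idP/idP.
- move/eqP => e; apply/andP; split; [apply/leP|apply/eqP]; nlia.
- case/andP => /leP h1 /eqP e; apply/eqP; nlia.
- by [].
- case/andP => /leP h1 /eqP e; nlia.
Qed.

Lemma ar2 (x y k : nat) : (x + k.+1 == y)%N = (x < y)%N && ((y - x).-1 == k).
Proof.
apply/idP/idP.
- move/eqP => e; apply/andP; split; [apply/leP|apply/eqP]; rewrite -?subn1; nlia.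
- case/andP => /leP h1 /eqP e; apply/eqP; move: e; rewrite -subn1 => e; nlia.
Qed.

Lemma xpow1 k (b : mon) g :
  op_pow (xop o) k (xmon K b) g = if (b o <= g o)%N && (g o - b o == k)%N then 1 else 0.
Proof.
rewrite xpowE /xmon mon1_eq ffunE eqxx -ar1.
by case: ifP.
Qed.

Lemma ypow1 k (b : mon) g :
  op_pow (yop o) k.+1 (xmon K b) g = if (g o < b o)%N && ((b o - g o).-1 == k)%N then 1 else 0.
Proof. by rewrite ypowE /xmon mon1_eq ffunE eqxx ar2. Qed.

Lemma sum_pick2 (F : nat -> K) (c : bool) d R :
  \sum_(k <- iota 0 R) F k * (if c && (d == k) then 1 else 0) = if c && (d < R)%N then F d else 0.
Proof.
case: c => /=; last by rewrite big1 // => k _; rewrite mulr0.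
rewrite (eq_bigr (fun k => if d == k then F k else 0)).
  by rewrite sum_pick ?iota_uniq // mem_iota.
by move=> k _; case: ifP; rewrite ?mulr1 ?mulr0.
Qed.

Section OneMat.
Variables (phi : op) (Lphi : lin_fs phi) (N : nat).
Hypothesis HX : forall i g b, big N g b -> op_comm (xop i) phi (xmon K b) g = 0.
Hypothesis HY : forall i g b, big N g b -> op_comm (yop i) phi (xmon K b) g = 0.
Let M g b := phi (xmon K b) g.

Let P k := M [ffun _ : 'I_1 => (k + N.+1)%N] [ffun _ => N.+1].
Let Q k := M [ffun _ : 'I_1 => N.+1] [ffun _ => (k + N.+1)%N].

Lemma M1 g b : big N g b -> M g b = if (b o <= g o)%N then P (g o - b o) else Q (b o - g o).
Proof.
move=> bg; rewrite /M (canon HX (isT : (0 < 1)%N) bg).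
rewrite (mon1 (cg N g b)) (mon1 (cg N b g)) !ffunE /P /Q /M.
case: (leqP (b o) (g o)) => h.
  by rewrite subnn add0n.
by rewrite subnn add0n.
Qed.

Lemma mk_addc k : addc [ffun _ : 'I_1 => k] o N.+1 = [ffun _ => (k + N.+1)%N].
Proof. by apply/ffunP => j; rewrite !ffunE (ord1 j) eqxx. Qed.

Lemma P0 k : (N.+1 < k)%N -> P k = 0.
Proof.
move=> hk.
have bg : big N [ffun _ : 'I_1 => k] [ffun _ => 0%N].
  by apply: (big_all _ (j := o)); rewrite ffunE ltnW.
have := shiftk HX o N.+1 bg; rewrite !mk_addc add0n /P /M => <-.
apply: (zeroY Lphi HY (i := o)); rewrite ?ffunE //; last by apply: leq_ltn_trans hk.
apply: (big_all _ (j := o)); rewrite !ffunE eqxx -ltnS prednK //.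
by apply: leq_ltn_trans hk.
Qed.

Lemma Q0 k : (N.+1 < k)%N -> Q k = 0.
Proof.
move=> hk.
have bg : big N [ffun _ : 'I_1 => 0%N] [ffun _ => k].
  by apply: (big_allr _ (j := o)); rewrite ffunE ltnW.
have := shiftk HX o N.+1 bg; rewrite !mk_addc add0n /Q /M => <-.
apply: (zeroX HX (i := o)); rewrite ?ffunE //; last by apply: leq_ltn_trans hk.
apply: (big_allr _ (j := o)); rewrite !ffunE eqxx -ltnS prednK //.
by apply: leq_ltn_trans hk.
Qed.

Definition psi : op :=
  lsum ([seq (P k, op_pow (xop o) k) | k <- iota 0 N.+2] ++
        [seq (Q k.+1, op_pow (yop o) k.+1) | k <- iota 0 N.+2]).

Lemma Sgen_psi : S_gen psi.
Proof.
apply: Sgen_lsum => p h0; case: (In_cat h0) => h;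
by case: (In_map h) => k ->; apply: Sgen_pow; constructor.
Qed.

Lemma psiE g b : big N g b -> psi (xmon K b) g = M g b.
Proof.
move=> bg; rewrite M1 // /psi lsumE big_cat !big_map.
rewrite (eq_bigr (fun k => P k * (if (b o <= g o)%N && (g o - b o == k)%N then 1 else 0)));
  last by move=> k _; rewrite -xpow1.
rewrite [X in _ + X = _](eq_bigr (fun k => Q k.+1 * (if (g o < b o)%N && ((b o - g o).-1 == k)%N then 1 else 0)));
  last by move=> k _; rewrite -ypow1.
rewrite !sum_pick2.
case: (leqP (b o) (g o)) => h /=.
  rewrite addr0; case: ifP => // /negbT; rewrite -leqNgt => hk.
  by rewrite P0.
rewrite add0r; have hp : (0 < b o - g o)%N by rewrite subn_gt0.
case: ifP => [_|/negbT]; first by rewrite prednK.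
rewrite -leqNgt => hk; rewrite Q0 // -(prednK hp) ltnS; exact: ltnW.
Qed.

Lemma one_fwd : in_S phi.
Proof.
pose D : op := fun f g => phi f g - psi f g.
have LD : lin_fs D by apply: lin_fs_sub => //; apply: Sgen_lfs; apply: Sgen_psi.
have [s hs] : inF' D.
  apply: (box_F LD (N := N)) => g b bg.
  by rewrite /D psiE // subrr.
exists (op_add psi (lsum [seq (t.1.1, Euop (t.1.2 o) (t.2 o)) | t : K * mon * mon <- s])); split.
  apply: S_add; first exact: Sgen_psi.
  by apply: Sgen_lsum => p h; case: (In_map h) => t ->; apply: Sgen_Euop.
move=> f fs g; rewrite /op_add lsumE big_map.
have -> : \sum_(t <- s) (t.1.1, Euop (t.1.2 o) (t.2 o)).1 * (t.1.1, Euop (t.1.2 o) (t.2 o)).2 f g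
   = SF s f g by apply: eq_bigr => t _ /=; rewrite EuopE.
by rewrite -hs // /D addrC subrK.
Qed.

End OneMat.

Lemma one_bwd (phi v : op) : S_gen v -> op_eq phi v ->
  forall i : 'I_1, inF' (op_comm (xop i) phi) /\ inF' (op_comm (yop i) phi).
Proof.
move=> Sv e i; rewrite (ord1 i).
pose z : mon := [ffun _ => 0%N].
have Z : forall g : mon, ~~ (0 < g o)%N -> g = z.
  by move=> g; rewrite lt0n negbK => /eqP h; rewrite (mon1 g) h.
have NZ : forall g : mon, (0 < g o)%N -> (g == z) = false.
  by move=> g h; apply/eqP => e0; move: h; rewrite e0 ffunE.
have cxx : allF (op_comm (xop o) (xop o) : op).
  by exists [::] => f g; rewrite SF_nil /op_comm /op_add /op_opp /op_mul subrr.
have cyy : allF (op_comm (yop o) (yop o) : op).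
  by exists [::] => f g; rewrite SF_nil /op_comm /op_add /op_opp /op_mul subrr.
have cxy : allF (op_comm (xop o) (yop o) : op).
  exists [:: ((-1 : K), z, z)] => f g.
  rewrite /SF big_cons big_nil /= addr0 /op_comm /op_add /op_opp /op_mul /xop /yop inc_pos dec_inc.
  case: ifP => h; first by rewrite inc_dec // subrr NZ // mulr0.
  by rewrite (Z g (negbT h)) eqxx sub0r mulN1r.
have cyx : allF (op_comm (yop o) (xop o) : op).
  exists [:: ((1 : K), z, z)] => f g.
  rewrite /SF big_cons big_nil /= addr0 /op_comm /op_add /op_opp /op_mul /xop /yop inc_pos dec_inc.
  case: ifP => h; first by rewrite inc_dec // subrr NZ // mulr0.
  by rewrite (Z g (negbT h)) eqxx subr0 mul1r.
have [sx hx] := comm_gen (@S_x K 1 o) (fun j => eq_ind_r (fun j => allF _) cxx (ord1 j))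
   (fun j => eq_ind_r (fun j => allF _) cxy (ord1 j)) Sv.
have [sy hy] := comm_gen (@S_y K 1 o) (fun j => eq_ind_r (fun j => allF _) cyx (ord1 j))
   (fun j => eq_ind_r (fun j => allF _) cyy (ord1 j)) Sv.
split.
  exists sx => f fs g; rewrite (comm_transfer _ e fs) ?hx //; exact: finsupp_xop.
exists sy => f fs g; rewrite (comm_transfer _ e fs) ?hy //; exact: finsupp_yop.
Qed.

End One.

Theorem corollary6p7 (K : fieldType) (charK0 : [pchar K] =i pred0)
  (n : nat) (n_gt0 : (0 < n)%N) (phi : op K n) :
  is_End phi ->
  ((forall i : 'I_n, in_F (op_comm (xop i) phi) /\ in_F (op_comm (yop i) phi))
   <-> (if n == 1%N then in_S phi else in_KF phi)).
Proof.
case=> _ Lphi.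
have Lf : lin_fs phi by exact: Lphi.
split.
- move=> H.
  have HB : forall i : 'I_n, exists N,
      (forall g b, big N g b -> op_comm (xop i) phi (xmon K b) g = 0) /\
      (forall g b, big N g b -> op_comm (yop i) phi (xmon K b) g = 0).
    move=> i; case: (H i) => /in_FE /bound_F [N1 h1] /in_FE /bound_F [N2 h2].
    exists (maxn N1 N2); split => g b bg; [apply: h1 | apply: h2];
      apply: big_le bg; [apply: leq_maxl | apply: leq_maxr].
  have [Nf hN] := fin_all_exists HB.
  pose N := (\max_(i < n) Nf i)%N.
  have HX : forall i g b, big N g b -> op_comm (xop i) phi (xmon K b) g = 0.
    by move=> i g b bg; apply: (hN i).1; apply: big_le bg; apply: leq_bigmax.
  have HY : forall i g b, big N g b -> op_comm (yop i) phi (xmon K b) g = 0.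
    by move=> i g b bg; apply: (hN i).2; apply: big_le bg; apply: leq_bigmax.
  case: ifP => hn.
    move/eqP: hn => hn; subst n.
    exact: (one_fwd Lf HX HY).
  have n2 : (1 < n)%N by rewrite ltn_neqAle eq_sym hn n_gt0.
  pose c := phi (xmon K (Lc n N)) (Lc n N).
  exists c, (fun f g => phi f g - c * f g); split.
    apply/in_FE; apply: (box_F (lin_fs_sub Lf (lin_fs_id c)) (N := N)) => g b bg.
    rewrite (diag_n2 Lf HX HY n2 bg) /xmon.
    by case: eqP => _; rewrite ?mulr1 ?mulr0 subrr.
  by move=> f fs g; rewrite /op_add /op_scale /op_id addrC subrK.
- case: ifP => hn.
    move/eqP: hn => hn; subst n.
    case=> v [Sv e] i; have [h1 h2] := one_bwd Sv e i.
    by split; apply/in_FE.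
  case=> c [g [/in_FE [s hs] e]] i.
  have E : forall f, finsupp f -> forall b, phi f b = c * f b + SF s f b.
    by move=> f fs b; rewrite e // /op_add /op_scale /op_id hs.
  split; apply/in_FE.
  + apply: (KF_comm (@S_x K n i) (@finsupp_xop K n i) E) => f b.
      exact: SF_xl.
    exact: SF_xr.
  + apply: (KF_comm (@S_y K n i) (@finsupp_yop K n i) E) => f b.
      exact: SF_yl.
    exact: SF_yr.
Qed.
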